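(* Let $I\ge0$, $\beta>0$, $\alpha,\omega\in S_I$ with $\alpha_0>0$. The endpoint constraint $(\alpha,\omega,\beta)$ is feasible if and only if $$\sum_{j=0}^i\alpha_j\ge\sum_{j=0}^i\omega_j\quad (i=0,\dots,I)$$ and $$\sum_{i=0}^I i\omega_i+(I+1)\omega_{I+}\le\sum_{k=0}^{I+1}k\alpha_k+\beta.$$
   Context: $S_I=\{\gamma\in\mathbb{R}^{I+2}:\gamma_j\ge0,\sum_{j=0}^{I+1}\gamma_j=1\}$; components of $\alpha$ are written $\alpha_0,\dots,\alpha_{I+1}$ and of $\omega$ as $\omega_0,\dots,\omega_I,\omega_{I+}$. A valid occupancy function on $[0,\beta]$ is an absolutely continuous $\gamma:[0,\beta]\to S_I$ whose rate $\theta$ (defined by $\dot\gamma_0=-\theta_0$, $\dot\gamma_j=\theta_{j-1}-\theta_j$ for $1\le j\le I$, $\dot\gamma_{I+}=\theta_I$, $\sum_j\theta_j=1$) lies in $S_I$ for a.e. $x$. $(\alpha,\omega,\beta)$ is feasible if there exists a valid occupancy function $\gamma$ on $[0,\beta]$ with $\gamma(0)=\alpha$ and $\gamma(\beta)=\omega$. *)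

(* Defs.v *)
From HB Require Import structures.
From mathcomp Require Import all_boot all_order all_algebra.
From mathcomp Require Import all_classical all_reals all_analysis.
Set Implicit Arguments. Unset Strict Implicit. Unset Printing Implicit Defensive.
Import Order.TTheory GRing.Theory Num.Theory numFieldNormedType.Exports.
Local Open Scope classical_set_scope.
Local Open Scope ring_scope.

(* Points of R^{I+2}, components indexed 0..I+1; index I+1 is the "I+" component. *)
Definition simplex (R : realType) (I : nat) (g : 'I_I.+2 -> R) : Prop :=
  (forall j, 0 <= g j) /\ \sum_(j < I.+2) g j = 1.

Definition abs_continuous_on (R : realType) (f : R -> R) (a b : R) : Prop :=
  forall eps : R, 0 < eps -> exists2 delta : R, 0 < delta &
    forall (n : nat) (l r : 'I_n -> R),
      (forall k, a <= l k /\ l k <= r k /\ r k <= b) ->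
      (forall k k', k != k' -> r k <= l k' \/ r k' <= l k) ->
      \sum_(k < n) (r k - l k) < delta ->
      \sum_(k < n) `|f (r k) - f (l k)| < eps.

(* Derivative of the occupancy component j prescribed by the rate theta:
   d gamma_0 = -theta_0, d gamma_j = theta_{j-1} - theta_j (1<=j<=I),
   d gamma_{I+} = theta_I.  (theta_{I+1} does not enter the dynamics.) *)
Definition occ_deriv (R : realType) (I : nat) (th : 'I_I.+2 -> R)
    (j : 'I_I.+2) : R :=
  (match nat_of_ord j with 0 => 0 | k.+1 => th (inord k) end)
  - (if (nat_of_ord j <= I)%N then th j else 0).

Definition valid_occupancy (R : realType) (I : nat) (beta : R)
    (gamma : R -> 'I_I.+2 -> R) : Prop :=
  (forall x, x \in `[0, beta] -> simplex (gamma x)) /\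
  (forall j, abs_continuous_on (fun t => gamma t j) 0 beta) /\
  exists theta : R -> 'I_I.+2 -> R,
    {ae (@lebesgue_measure R), forall x, x \in `[0, beta] ->
       simplex (theta x) /\
       forall j, is_derive x 1 (fun t => gamma t j) (occ_deriv (theta x) j)}.

Definition feasible (R : realType) (I : nat) (alpha omega : 'I_I.+2 -> R)
    (beta : R) : Prop :=
  exists gamma : R -> 'I_I.+2 -> R,
    valid_occupancy beta gamma /\ gamma 0 = alpha /\ gamma beta = omega.

(* Main.v *)
Require Import Defs.
From HB Require Import structures.
From mathcomp Require Import all_boot all_order all_algebra.
From mathcomp Require Import all_classical all_reals all_analysis.
From mathcomp Require Import measurable_realfun.
From mathcomp Require Import ring lra zify.
Set Implicit Arguments. Unset Strict Implicit. Unset Printing Implicit Defensive.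
Import Order.TTheory GRing.Theory Num.Theory numFieldNormedType.Exports.
Local Open Scope classical_set_scope.
Local Open Scope ring_scope.
Lemma deriv_local (R : realType) (f : R -> R) (x d e : R) :
  0 < e -> is_derive x 1 f d ->
  exists2 r, 0 < r & forall h, h != 0 -> `|h| < r ->
     `|h^-1 * (f (h + x) - f x) - d| < e.
Proof.
move=> e0 [df dv].
have := df; rewrite /derivable => /cvg_ex[l /= hl].
have ld : l = d by rewrite -dv /derive; apply/esym/cvg_lim.
subst l.
move/cvgrPdist_lt : hl => /(_ e e0).

move=> /nbhs_ballP[r /= r0 H].
exists r => // h h0 hr.
have := H h; rewrite /ball /= sub0r normrN => /(_ hr h0).
by rewrite distrC /= /GRing.scale /= mulr1.
Qed.
Section M.
Context (R : realType).
Local Notation mu := (@lebesgue_measure R).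

Definition nov (p q : R * R) : bool := (p.2 <= q.1) || (q.2 <= p.1).

Lemma in_bigU (s : seq (R * R)) (t : R) :
  (\big[setU/set0]_(q <- s) `]q.1, q.2]%classic) t ->
  exists2 q, q \in s & `]q.1, q.2]%classic t.
Proof.
elim: s => [|q s IH]; first by rewrite big_nil.
rewrite big_cons => -[H|/IH[q' q's H]].
  by exists q => //; rewrite mem_head.
by exists q' => //; rewrite in_cons q's orbT.
Qed.

Lemma meas_seq (s : seq (R * R)) :
  all (fun p => p.1 <= p.2) s -> pairwise nov s ->
  ((\sum_(p <- s) (p.2 - p.1))%:E = mu (\big[setU/set0]_(p <- s) `]p.1, p.2]%classic)).
Proof.
elim: s => [|p s IH]; first by rewrite !big_nil measure0.
move=> /= /andP[p12 alls] /andP[allp pws].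
rewrite !big_cons measureU //=.
- rewrite -IH // EFinD; congr (_ + _).
  rewrite lebesgue_measure_itv /=; case: ifPn; first by rewrite lte_fin.
  rewrite lte_fin -leNgt => H; have -> : p.2 = p.1 by apply/eqP; rewrite eq_le H p12.
  by rewrite subrr.
- by apply: bigsetU_measurable => q _; exact: measurable_itv.
- apply/seteqP; split => // t [/= Ht /in_bigU[q qs Hq]].
  move/allP: allp => /(_ q qs); rewrite /nov => /orP[] H.
    move: Ht Hq; rewrite /= !in_itv /= => /andP[_ h1] /andP[h2 _].
    by have := lt_le_trans h2 (le_trans h1 H); rewrite ltxx.
  move: Ht Hq; rewrite /= !in_itv /= => /andP[h1 _] /andP[_ h2].
  by have := lt_le_trans h1 (le_trans h2 H); rewrite ltxx.
Qed.

Lemma seq_len_le (U : set R) (s : seq (R * R)) :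
  open U -> all (fun p => p.1 <= p.2) s -> pairwise nov s ->
  (forall p t, p \in s -> p.1 <= t <= p.2 -> U t) ->
  ((\sum_(p <- s) (p.2 - p.1))%:E <= mu U)%E.
Proof.
move=> oU a pw sub; rewrite meas_seq //; apply: le_measure.
- by rewrite inE; apply: bigsetU_measurable => q _; exact: measurable_itv.
- by rewrite inE; exact: open_measurable.
move=> t /in_bigU[q qs]; rewrite /= in_itv /= => /andP[h1 h2].
by apply: (sub q) => //; rewrite h2 ltW.
Qed.
End M.

Lemma deriv_step (R : realType) (f : R -> R) (x d e : R) :
  0 < e -> d <= 0 -> is_derive x 1 f d ->
  exists2 r, 0 < r & forall y, `|y - x| < r ->
    (x < y -> f y - f x <= e * (y - x)) /\ (y < x -> f x - f y <= e * (x - y)).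
Proof.
move=> e0 d0 D; have [r r0 H] := deriv_local e0 D.
exists r => // y yr; split => xy.
- have h0 : y - x != 0 by rewrite subr_eq0 gt_eqF.
  have := H _ h0 yr; rewrite subrK => /(le_lt_trans (ler_norm _)).
  rewrite ltrBlDr => H1.
  have hp : 0 < y - x by rewrite subr_gt0.
  have : (y - x)^-1 * (f y - f x) <= e by lra.
  by rewrite ler_pdivrMl // mulrC.
- have h0 : y - x != 0 by rewrite subr_eq0 lt_eqF.
  have := H _ h0 yr; rewrite subrK => /(le_lt_trans (ler_norm _)).
  rewrite ltrBlDr => H1.
  have hp : 0 < x - y by rewrite subr_gt0.
  have : (x - y)^-1 * (f x - f y) <= e.
    have -> : (x - y)^-1 * (f x - f y) = (y - x)^-1 * (f y - f x).
      by rewrite -(opprB y x) -(opprB (f y)) invrN mulrNN.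
    lra.
  by rewrite ler_pdivrMl // mulrC.
Qed.

Section KL.
Context (R : realType).
Local Notation mu := (@lebesgue_measure R).

Definition good (a x : R) (U : set R) (s : seq (R * R)) :=
  [/\ all (fun p => (a <= p.1) && (p.1 <= p.2) && (p.2 <= x)) s,
      pairwise (@nov R) s &
      (forall p t, p \in s -> p.1 <= t <= p.2 -> U t)].

Definition Pc (f : R -> R) (a e : R) (U : set R) (x : R) :=
  exists s, good a x U s /\
    f x - f a <= e * (x - a) + \sum_(p <- s) (f p.2 - f p.1).

Lemma Pc_a f a e U : Pc f a e U a.
Proof.
exists [::]; split; first by split.
by rewrite big_nil !subrr mulr0 addr0.
Qed.

Lemma extD f a e U x z : 0 <= e -> Pc f a e U x -> x <= z ->
  f z - f x <= e * (z - x) -> Pc f a e U z.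
Proof.
move=> e0 [s [[A pw sub] H]] xz Hz; exists s; split.
  split => //; apply/allP => p ps; move/allP: A => /(_ p ps) /andP[->].
  by move=> px; apply: le_trans px xz.
have : e * (z - a) = e * (z - x) + e * (x - a) by rewrite -mulrDr addrA subrK.
lra.
Qed.

Lemma extU f a e U x z : 0 <= e -> a <= x -> Pc f a e U x -> x <= z ->
  (forall t, x <= t <= z -> U t) -> Pc f a e U z.
Proof.
move=> e0 ax [s [[A pw sub] H]] xz Hz; exists ((x, z) :: s); split.
  split.
  - rewrite /= ax xz lexx /=; apply/allP => p ps; move/allP: A => /(_ p ps) /andP[->].
    by move=> px; apply: le_trans px xz.
  - rewrite /= pw andbT; apply/allP => p ps; move/allP: A => /(_ p ps).
    by move=> /andP[_ px]; rewrite /nov /= px orbT.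
  - move=> p t; rewrite in_cons => /orP[/eqP -> /= |ps]; first exact: Hz.
    exact: sub.
rewrite big_cons /=.
have : e * (x - a) <= e * (z - a) by apply: ler_wpM2l => //; lra.
lra.
Qed.

Lemma sum_nth (F : R * R -> R) (s : seq (R * R)) :
  \sum_(k < size s) F (nth (0,0) s k) = \sum_(p <- s) F p.
Proof. by rewrite (big_nth (0,0)) big_mkord. Qed.

Lemma good_bound (f : R -> R) a b e U d s :
  (forall n (l r : 'I_n -> R),
      (forall k, a <= l k /\ l k <= r k /\ r k <= b) ->
      (forall k k', k != k' -> r k <= l k' \/ r k' <= l k) ->
      \sum_(k < n) (r k - l k) < d ->
      \sum_(k < n) `|f (r k) - f (l k)| < e) ->
  open U -> (mu U < d%:E)%E ->
  good a b U s -> \sum_(p <- s) (f p.2 - f p.1) < e.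
Proof.
move=> ACd oU muU [A pw sub].
have L : \sum_(p <- s) (p.2 - p.1) < d.
  rewrite -lte_fin; apply: le_lt_trans muU; apply: seq_len_le => //.
  by apply/allP => p ps; move/allP: A => /(_ p ps) /andP[/andP[_ ->]].
have := ACd (size s) (fun k => (nth (0,0) s k).1) (fun k => (nth (0,0) s k).2).
rewrite (sum_nth (fun p => `|f p.2 - f p.1|)) (sum_nth (fun p => p.2 - p.1)).
move=> /(_ _ _ L) H.
apply: le_lt_trans (H _ _); first by apply: ler_sum => p _; exact: ler_norm.
- move=> k; have := mem_nth (0,0) (ltn_ord k); move/allP: A => A /A.
  by move=> /andP[/andP[-> ->] ->].
- have /(pairwiseP (0,0)) Hpw := pw.
  move=> k k'; rewrite neq_ltn => /orP[] kk'.
    have := Hpw k k' (ltn_ord k) (ltn_ord k') kk'.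
    by rewrite /nov => /orP[]; [left|right].
  have := Hpw k' k (ltn_ord k') (ltn_ord k) kk'.
  by rewrite /nov => /orP[]; [right|left].
Qed.
End KL.

Section KL2.
Context (R : realType).
Local Notation mu := (@lebesgue_measure R).

Lemma KL (f : R -> R) (a b : R) (N : set R) :
  a <= b -> abs_continuous_on f a b -> mu.-negligible N ->
  (forall x, a <= x -> x <= b -> ~ N x -> exists2 d, d <= 0 & is_derive x 1 f d) ->
  f b <= f a.
Proof.
move=> ab AC NN Hd.
apply/ler_addgt0Pr => e e0.
pose e1 := e / (b - a + 1).
have e1p : 0 < e1 by rewrite divr_gt0 //; lra.
have [d d0 ACd] := AC e1 e1p.
have [U [oU NU muU]] : exists U, [/\ open U, N `<=` U & (mu U < d%:E)%E].
  have N0 := proj1 (negligible_outer_measure N) NN.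
  have d2 : 0 < d / 2 by rewrite divr_gt0.
  have [U [oU NU muU]] := outer_measure_open_le N d2.
  exists U; split => //; apply: le_lt_trans muU _.
  by rewrite N0 add0e lte_fin; lra.
pose S := [set x | (a <= x /\ x <= b) /\ Pc f a e1 U x].
have Sa : S a by split; [lra | exact: Pc_a].
have ubS : ubound S b by move=> x [[_ ?] _].
have hs : has_sup S by split; [exists a | exists b].
pose s0 := sup S.
have as0 : a <= s0 := sup_upper_bound hs Sa.
have s0b : s0 <= b := ge_sup (ex_intro _ a Sa) ubS.
have step : exists2 r, 0 < r & forall x, S x -> s0 - r < x ->
    Pc f a e1 U s0 /\ forall y, s0 < y -> y < s0 + r -> y <= b -> Pc f a e1 U y.
  have [Us|nUs] := pselect (U s0).
  - have := oU s0 Us => /nbhs_ballP[r /= r0 H].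
    exists r => // x Sx xr; have xs0 : x <= s0 := sup_upper_bound hs Sx.
    case: Sx => -[ax xb] Px.
    have ext z : x <= z -> z < s0 + r -> Pc f a e1 U z.
      move=> xz zr; apply: extU (ltW e1p) ax Px xz _ => t /andP[xt tz].
      apply: H; rewrite /ball /= ltr_norml; apply/andP; split; lra.
    split; first by apply: ext => //; lra.
    by move=> y sy yr yb; apply: ext => //; lra.
  - have nN : ~ N s0 by move=> /NU.
    have [d' d'0 D] := Hd s0 as0 s0b nN.
    have [r r0 H] := deriv_step e1p d'0 D.
    exists r => // x Sx xr; have xs0 : x <= s0 := sup_upper_bound hs Sx.
    case: Sx => -[ax xb] Px.
    have Ps0 : Pc f a e1 U s0.
      case: (eqVneq x s0) => [<- //|xn].
      have xs : x < s0 by rewrite lt_neqAle xn xs0.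
      apply: extD (ltW e1p) Px xs0 _.
      have /(_ x) := H; rewrite ltr_norml => /(_ _)/proj2; apply => //.
      by apply/andP; split; lra.
    split => // y sy yr yb; apply: extD (ltW e1p) Ps0 (ltW sy) _.
    have /(_ y) := H; rewrite ltr_norml => /(_ _)/proj1; apply => //.
    by apply/andP; split; lra.
have [r r0 st] := step.
have [x Sx xr] := sup_adherent r0 hs.
have [Ps0 Py] := st x Sx xr.
have s0b' : s0 = b.
  apply/eqP; rewrite eq_le s0b /= leNgt; apply/negP => sb.
  pose y := Order.min (s0 + r / 2) b.
  have y1 : s0 < y by rewrite lt_min sb andbT; lra.
  have y2 : y <= s0 + r / 2 by rewrite ge_min lexx.
  have y3 : y <= b by rewrite ge_min lexx orbT.
  have Sy : S y by split; [lra | apply: Py => //; lra].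
  have := sup_upper_bound hs Sy; rewrite -/s0; lra.
have [sq [G H]] : Pc f a e1 U b by rewrite -s0b'.
have := good_bound ACd oU muU G.
have E : e1 * (b - a + 1) = e by rewrite /e1 divfK //; lra.
have : e1 * (b - a) + e1 = e by rewrite -E; ring.
lra.
Qed.
End KL2.

Section Util.
Context (R : realType).

Lemma ac_ext (f g : R -> R) a b : (forall t, f t = g t) ->
  abs_continuous_on f a b -> abs_continuous_on g a b.
Proof. by move=> fg; have -> : f = g by apply/funext. Qed.

Lemma ac_cst (c a b : R) : abs_continuous_on (fun _ => c) a b.
Proof.
move=> e e0; exists 1 => // n l r _ _ _.
by rewrite (eq_bigr (fun _ => 0)) ?big1 // => k _; rewrite subrr normr0.
Qed.

Lemma ac_id (a b : R) : abs_continuous_on (fun t => t) a b.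
Proof.
move=> e e0; exists e => // n l r H _ S.
rewrite (eq_bigr (fun k => r k - l k)) // => k _.
by rewrite ger0_norm // subr_ge0; case: (H k) => _ [].
Qed.

Lemma ac_add (f g : R -> R) a b : abs_continuous_on f a b ->
  abs_continuous_on g a b -> abs_continuous_on (fun t => f t + g t) a b.
Proof.
move=> Af Ag e e0.
have e2 : 0 < e / 2 by rewrite divr_gt0.
have [d1 d10 H1] := Af _ e2; have [d2 d20 H2] := Ag _ e2.
exists (Order.min d1 d2); first by rewrite lt_min d10 d20.
move=> n l r Hb Hn S.
have S1 : \sum_(k < n) (r k - l k) < d1 by apply: lt_le_trans S _; rewrite ge_min lexx.
have S2 : \sum_(k < n) (r k - l k) < d2 by apply: lt_le_trans S _; rewrite ge_min lexx orbT.
have := H1 n l r Hb Hn S1; have := H2 n l r Hb Hn S2.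
have : \sum_(k < n) `|f (r k) + g (r k) - (f (l k) + g (l k))| <=
  \sum_(k < n) `|f (r k) - f (l k)| + \sum_(k < n) `|g (r k) - g (l k)|.
  rewrite -big_split /=; apply: ler_sum => k _.
  by rewrite opprD addrACA ler_normD.
lra.
Qed.

Lemma ac_scale (f : R -> R) c a b : abs_continuous_on f a b ->
  abs_continuous_on (fun t => c * f t) a b.
Proof.
move=> Af e e0.
have c1 : 0 < `|c| + 1 by rewrite ltr_wpDl.
have e' : 0 < e / (`|c| + 1) by rewrite divr_gt0.
have [d d0 H] := Af _ e'.
exists d => // n l r Hb Hn S.
rewrite (eq_bigr (fun k => `|c| * `|f (r k) - f (l k)|)); last first.
  by move=> k _; rewrite -normrM mulrBr.
rewrite -mulr_sumr; have HS := H n l r Hb Hn S.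
have : `|c| * (e / (`|c| + 1)) < e.
  rewrite mulrA ltr_pdivrMr // mulrDr mulr1; lra.
have : `|c| * \sum_(i < n) `|f (r i) - f (l i)| <= `|c| * (e / (`|c| + 1)).
  by apply: ler_wpM2l => //; exact: ltW.
lra.
Qed.

Lemma ac_sum n (F : 'I_n -> R -> R) a b : (forall j, abs_continuous_on (F j) a b) ->
  abs_continuous_on (fun t => \sum_(j < n) F j t) a b.
Proof.
elim: n F => [|n IH] F H.
  by apply: (ac_ext _ (ac_cst 0 a b)) => t; rewrite big_ord0.
apply: (ac_ext _ (ac_add (IH (fun j => F (widen_ord (leqnSn n) j)) (fun j => H _)) (H ord_max))).
by move=> t; rewrite big_ord_recr.
Qed.

Lemma der_ext (f g : R -> R) (x d : R) : (forall t, f t = g t) ->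
  is_derive x (1:R) f d -> is_derive x (1:R) g d.
Proof. by move=> fg; have -> : f = g by apply/funext. Qed.

Lemma der_sum n (F : 'I_n -> R -> R) (dF : 'I_n -> R) (x : R) :
  (forall j, is_derive x (1:R) (F j) (dF j)) ->
  is_derive x (1:R) (fun t => \sum_(j < n) F j t) (\sum_(j < n) dF j).
Proof.
move=> H; have := is_derive_sum H; rewrite fct_sumE; exact.
Qed.

Lemma der_affine (a c x : R) : is_derive x (1:R) (fun t => a + c * t) c.
Proof.
have := is_deriveD (is_derive_cst a x 1) (is_deriveZ c (is_derive_id x 1)).
rewrite add0r /GRing.scale /= mulr1 => D.
by apply: der_ext D => t.
Qed.

Lemma ord2nat n (F : 'I_n.+1 -> R) :
  \sum_(j < n.+1) F j = \sum_(0 <= k < n.+1) F (inord k).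
Proof. by rewrite big_mkord; apply: eq_bigr => j _; rewrite inord_val. Qed.

Lemma ord2natP n (P : pred nat) (F : 'I_n.+1 -> R) :
  \sum_(j < n.+1 | P j) F j = \sum_(0 <= k < n.+1 | P k) F (inord k).
Proof. by rewrite big_mkord; apply: eq_bigr => j _; rewrite inord_val. Qed.

End Util.

Section Comb.
Context (R : realType).

Lemma tele1 (t : nat -> R) i :
  \sum_(0 <= k < i.+1) ((if k is k'.+1 then t k' else 0) - t k) = - t i.
Proof.
elim: i => [|i IH]; first by rewrite big_nat1 sub0r.
by rewrite big_nat_recr //= IH addrA addNr add0r.
Qed.

Lemma tele2 (t : nat -> R) m :
  \sum_(0 <= k < m.+1) k%:R * ((if k is k'.+1 then t k' else 0) - t k)
  = \sum_(0 <= k < m) t k - m%:R * t m.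
Proof.
elim: m => [|m IH]; first by rewrite big_nat1 big_geq // !mul0r subrr.
rewrite big_nat_recr //= IH big_nat_recr //= -natr1; ring.
Qed.

Lemma abel (d : nat -> R) m :
  \sum_(0 <= i < m) \sum_(0 <= k < i.+1) d k
  = \sum_(0 <= k < m) (m%:R - k%:R) * d k.
Proof.
elim: m => [|m IH]; first by rewrite !big_geq.
rewrite big_nat_recr //= IH [in RHS]big_nat_recr //=.
rewrite [in RHS](eq_bigr (fun k => (m%:R - k%:R) * d k + d k)); last first.
  by move=> k _; rewrite -natr1; ring.
rewrite big_split /= [in LHS]big_nat_recr //= -natr1; ring.
Qed.

Lemma sum_cut (F : nat -> R) n i : (i < n)%N ->
  \sum_(0 <= k < n | (k <= i)%N) F k = \sum_(0 <= k < i.+1) F k.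
Proof.
by move=> lin; rewrite (big_nat_widen 0 i.+1 n xpredT).

Qed.

End Comb.

Unset Implicit Arguments.


Theorem lemma2p4 (R : realType) (I : nat) (beta : R)
    (alpha omega : 'I_I.+2 -> R) :
  0 < beta -> simplex alpha -> simplex omega -> 0 < alpha ord0 ->
  (feasible alpha omega beta <->
   ((forall i : nat, (i <= I)%N ->
       \sum_(j < I.+2 | (nat_of_ord j <= i)%N) omega j
         <= \sum_(j < I.+2 | (nat_of_ord j <= i)%N) alpha j) /\
    \sum_(k < I.+2) (nat_of_ord k)%:R * omega k
      <= \sum_(k < I.+2) (nat_of_ord k)%:R * alpha k + beta)).
Proof.
move=> b0 [sa0 sa1] [so0 so1] _; split.
- move=> [g [[gs [gac [th Hae]]] [g0 gb]]].
  have HP : forall x, 0 <= x -> x <= beta ->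
      ~ (~` [set x | x \in `[0, beta] -> simplex (th x) /\
          forall j, is_derive x 1 (fun t => g t j) (occ_deriv (th x) j)]) x ->
      simplex (th x) /\
          forall j, is_derive x 1 (fun t => g t j) (occ_deriv (th x) j).
    move=> x x0 xb nn; have Px := contrapT nn; apply: Px.
    by rewrite in_itv /= x0 xb.
  split.
  + move=> i iI.
    have := @KL R (fun t => \sum_(j < I.+2 | (nat_of_ord j <= i)%N) g t j) 0 beta
      _ (ltW b0) _ Hae.
    rewrite /= g0 gb; apply.
    * apply: (ac_ext _ (ac_sum (F := fun j => if (nat_of_ord j <= i)%N then fun t => g t j else fun _ => 0) _)).
        by move=> t; rewrite [in RHS]big_mkcond /=; apply: eq_bigr => j _; case: ifP.
      by move=> j; case: ifP => _; [exact: gac | exact: ac_cst].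
    * move=> x x0 xb nN; have [[th0 th1] D] := HP x x0 xb nN.
      exists (- th x (inord i)); first by rewrite oppr_le0.
      have := der_sum (F := fun j => if (nat_of_ord j <= i)%N then fun t => g t j else fun _ => 0)
        (dF := fun j => if (nat_of_ord j <= i)%N then occ_deriv (th x) j else 0) (x := x) _.
      move=> /(_ _) H; have {}H : is_derive x 1 (fun t => \sum_(j < I.+2) (if (nat_of_ord j <= i)%N then g t j else 0))
          (\sum_(j < I.+2) (if (nat_of_ord j <= i)%N then occ_deriv (th x) j else 0)).
        apply: der_ext (H _) => [t|j]; first by apply: eq_bigr => j _; case: ifP.
        case: ifP => _ //; exact: is_derive_cst.
      rewrite -big_mkcond /= in H.
      have E : \sum_(j < I.+2 | (nat_of_ord j <= i)%N) occ_deriv (th x) j = - th x (inord i).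
        rewrite (ord2natP (fun k => (k <= i)%N)) sum_cut; last by rewrite ltnS (leq_trans iI (leqnSn I)).
        rewrite -(tele1 (fun k => th x (inord k))).
        apply: eq_big_nat => k /andP[_ ki]; rewrite /occ_deriv inordK; last by lia.
        have -> : (k <= I)%N by lia.
        by [].  
      rewrite -E; apply: (der_ext _ H) => t; by rewrite [in RHS]big_mkcond.
  + suff H : \sum_(k < I.+2) (nat_of_ord k)%:R * g beta k + (0 + (-1) * beta) <=
             \sum_(k < I.+2) (nat_of_ord k)%:R * g 0 k + (0 + (-1) * 0).
      by move: H; rewrite g0 gb; lra.
    apply: (@KL R (fun t => \sum_(k < I.+2) (nat_of_ord k)%:R * g t k + (0 + (-1) * t))
      0 beta _ (ltW b0) _ Hae).
    * apply: ac_add; first by apply: ac_sum => k; apply: ac_scale; exact: gac.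
      apply: ac_add; [exact: ac_cst | apply: ac_scale; exact: ac_id].
    * move=> x x0 xb nN; have [[th0 th1] D] := HP x x0 xb nN.
      exists (- th x (inord I.+1)); first by rewrite oppr_le0.
      have H1 := der_sum (F := fun k t => (nat_of_ord k)%:R * g t k)
        (dF := fun k => (nat_of_ord k)%:R * occ_deriv (th x) k) (x := x).
      have {}H1 := H1 (fun j => der_ext (fun t => erefl) (is_deriveZ (nat_of_ord j)%:R (D j))).
      have H2 := is_deriveD H1 (der_affine 0 (-1) x).
      have E : \sum_(k < I.+2) (nat_of_ord k)%:R * occ_deriv (th x) k + -1
               = - th x (inord I.+1).
        rewrite ord2nat big_nat_recr //= inordK // /occ_deriv /= inordK // ltnn subr0.
        rewrite (eq_big_nat _ _ (F2 := fun k => k%:R * ((if k is k'.+1 then th x (inord k') else 0) - th x (inord k)))); last first.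
          move=> k /andP[_ kI]; rewrite (@inordK I.+1 k); last by lia.
          rewrite /occ_deriv.
          have -> : (k <= I)%N by lia.
          by case: k {kI}.
        rewrite tele2.
        move: th1; rewrite ord2nat big_nat_recr //= big_nat_recr //= => th1.
        rewrite -natr1 mulrDl mul1r; lra.
      rewrite -E; apply: (der_ext _ H2) => t //.
- move=> [H1 H2].
  pose dn k := alpha (inord k) - omega (inord k).
  pose P i := \sum_(0 <= k < i.+1) dn k.
  have P0 : forall i, (i <= I)%N -> 0 <= P i.
    move=> i iI; have := H1 i iI.
    rewrite !(ord2natP (fun k => (k <= i)%N)) !sum_cut; try lia.
    by rewrite /P /dn sumrB subr_ge0.
  have Ptot : P I + dn I.+1 = 0.
    rewrite /P -big_nat_recr //= /dn sumrB -(ord2nat alpha) -(ord2nat omega).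
    by rewrite sa1 so1 subrr.
  have Psum : \sum_(0 <= i < I.+1) P i <= beta.
    rewrite /P abel.
    have A1 : \sum_(0 <= k < I.+2) ((I.+1)%:R - k%:R) * dn k =
      (I.+1)%:R * \sum_(0 <= k < I.+2) dn k - \sum_(0 <= k < I.+2) k%:R * dn k.
      by rewrite mulr_sumr -sumrB; apply: eq_bigr => k _; ring.
    have A2 : \sum_(0 <= k < I.+2) dn k = 0 by rewrite big_nat_recr.
    have A3 : \sum_(0 <= k < I.+2) ((I.+1)%:R - k%:R) * dn k =
        \sum_(0 <= k < I.+1) ((I.+1)%:R - k%:R) * dn k.
      by rewrite big_nat_recr //= subrr mul0r addr0.
    have A4 : \sum_(0 <= k < I.+2) k%:R * dn k =
        \sum_(k < I.+2) (nat_of_ord k)%:R * alpha k -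
        \sum_(k < I.+2) (nat_of_ord k)%:R * omega k.
      rewrite (ord2nat (fun k : 'I_I.+2 => (nat_of_ord k)%:R * alpha k)).
      rewrite (ord2nat (fun k : 'I_I.+2 => (nat_of_ord k)%:R * omega k)) -sumrB.
      by apply: eq_big_nat => k /andP[_ kI]; rewrite inordK // /dn; ring.
    rewrite -A3 A1 A2 mulr0 sub0r A4; lra.
  pose th := fun j : 'I_I.+2 => if (nat_of_ord j <= I)%N then P j / beta
             else 1 - (\sum_(0 <= i < I.+1) P i) / beta.
  have bn0 : beta != 0 by rewrite gt_eqF.
  exists (fun x j => alpha j + (omega j - alpha j) / beta * x).
  split; [split; [|split] | split].
  + move=> x; rewrite in_itv /= => /andP[x0 xb]; split.
    * move=> j.
      have -> : alpha j + (omega j - alpha j) / beta * x =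
          (1 - x / beta) * alpha j + (x / beta) * omega j by field.
      have l0 : 0 <= x / beta by rewrite divr_ge0 // ltW.
      have l1 : x / beta <= 1 by rewrite ler_pdivrMr // mul1r.
      by apply: addr_ge0; apply: mulr_ge0 => //; lra.
    * by rewrite big_split /= -!mulr_suml sumrB sa1 so1 subrr mul0r mul0r addr0.
  + by move=> j; apply: ac_add; [exact: ac_cst | apply: ac_scale; exact: ac_id].
  + exists (fun _ => th); apply: aeW => x _; split.
    * split.
      - move=> j; rewrite /th; case: ifP => jI.
          by rewrite divr_ge0 ?P0 // ltW.
        by rewrite subr_ge0 ler_pdivrMr // mul1r.
      - rewrite big_ord_recr /=.
        rewrite (eq_bigr (fun j : 'I_I.+1 => P j / beta)); last first.
          by move=> j _; rewrite /th /= -ltnS ltn_ord.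
        rewrite /th /= ltnn -mulr_suml.
        have -> : \sum_(j < I.+1) P j = \sum_(0 <= i < I.+1) P i by rewrite big_mkord.
        by rewrite addrC subrK.
    * move=> j.
      have E : occ_deriv th j = (omega j - alpha j) / beta.
        case: j => k kI; rewrite /occ_deriv /=.
        have -> : alpha (Ordinal kI) = alpha (inord k).
          by congr alpha; apply: val_inj; rewrite /= inordK.
        have -> : omega (Ordinal kI) = omega (inord k).
          by congr omega; apply: val_inj; rewrite /= inordK.
        case: k kI => [|k] kI.
          rewrite /th /= /P big_nat1 /dn.
          by rewrite sub0r -mulNr opprB.
        rewrite /th inordK; last by lia.
        have -> : (k <= I)%N by lia.
        case: ifP => kI'.
          have -> : P k.+1 = P k + dn k.+1 by rewrite /P [in LHS]big_nat_recr.
          by rewrite /= kI' /dn; field.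
        have kE : k = I.
          by have := negbT kI'; rewrite -leqNgt => kI2; lia.
        subst k; rewrite subr0.
        have -> : P I = - dn I.+1 by apply/eqP; rewrite -subr_eq0 opprK Ptot.
        by rewrite /dn opprB.
      rewrite E; exact: der_affine.
  + by apply/funext => j /=; rewrite mulr0 addr0.
  + by apply/funext => j /=; rewrite divfK // addrC subrK.
Qed.
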